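(* Let $\Sigma\in\mathsf{c}\text{-}\mathsf{Fan}_{\rm sc}^{+-}(2)$ with rays $v_1=(1,0),v_2,\ldots,v_{n-2}=(0,-1),v_{n-1}=(-1,0),v_n=v_0=(0,1)$ in clockwise order, facets $\sigma_i=\operatorname{cone}\{v_i,v_{i+1}\}$ ($1\le i\le n$), and quiddity sequence $\mathrm{s}(\Sigma)=(a_1,\ldots,a_{n-2};0,0)$. (a) We have $\mathrm{s}(\rho(\Sigma))=(a_2,\ldots,a_{n-2},a_1;0,0)$. In particular, $\rho^{n-2}(\Sigma)=\Sigma$ holds, and therefore $\rho$ is an invertible operation. (b) For each $1\le i\le n-3$, we have $D_{\sigma_i}(\Sigma)=\rho^{n-3-i}\circ D_{\sigma_{n-3}}\circ\rho^{i+1}(\Sigma)$.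
   Context: $\mathsf{c}\text{-}\mathsf{Fan}_{\rm sc}^{+-}(2)$ is the set of complete nonsingular sign-coherent fans in $\mathbb{R}^2$ with positive cone $\sigma_+=\operatorname{cone}\{(1,0),(0,1)\}$ and negative cone $\operatorname{cone}\{(-1,0),(0,-1)\}$ which contain $\sigma_{-+}=\operatorname{cone}\{(-1,0),(0,1)\}$. The quiddity sequence is defined by $a_iv_i=v_{i-1}+v_{i+1}$ (here $a_{n-1}=a_n=0$). For a cone $\sigma=\operatorname{cone}\{u,v\}$ of a nonsingular fan, the subdivision $D_\sigma$ adds the ray $u+v$ and replaces $\sigma$ by $\operatorname{cone}\{u,u+v\}$ and $\operatorname{cone}\{v,u+v\}$. The rotation $\rho(\Sigma)$: take $\sigma=\operatorname{cone}\{(1,0),(\ell,-1)\}\in\Sigma$ (i.e. $v_2=(\ell,-1)$); let $\Sigma'$ have rays $(\Sigma_1\setminus\{(0,1)\})\cup\{(-\ell,1)\}$ and 2-dimensional cones $(\Sigma_2\setminus\{\sigma_+,\sigma_{-+}\})\cup\{-\sigma,\operatorname{cone}\{(-\ell,1),(1,0)\}\}$; then $\rho(\Sigma)$ is the image of $\Sigma'$ under the linear map of $\mathbb{R}^2$ sending $(1,0)\mapsto(0,1)$ and $(\ell,-1)\mapsto(1,0)$. *)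

(* Defs.v *)
From mathcomp Require Import all_boot all_algebra.
Set Implicit Arguments. Unset Strict Implicit. Unset Printing Implicit Defensive.
Import GRing.Theory Num.Theory.
Local Open Scope ring_scope.

Definition vec := (int * int)%type.
Definition vadd (u v : vec) : vec := (u.1 + v.1, u.2 + v.2).
Definition vscale (a : int) (v : vec) : vec := (a * v.1, a * v.2).
Definition det (u v : vec) : int := u.1 * v.2 - u.2 * v.1.

(* A complete 2-dimensional fan is determined by its rays; we encode a fan of
   c-Fan_sc^{+-}(2) by the list [v_1; ...; v_n] of its (primitive) rays in
   clockwise order, starting with v_1 = (1,0).  Its 2-dimensional cones are
   sigma_i = cone{v_i, v_{i+1}} (indices mod n).
   [cray s i] is the 0-indexed cyclic access: paper's v_i = cray s (i-1). *)
Definition cray (s : seq vec) (i : nat) : vec := nth (0, 0) s (i %% size s)%N.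

(* Membership in c-Fan_sc^{+-}(2):
   v_1 = (1,0), v_{n-2} = (0,-1), v_{n-1} = (-1,0), v_n = (0,1)
   (so sigma_+, sigma_-, sigma_{-+} are cones), the other rays lie in the
   open fourth quadrant (sign-coherence), and every cone
   cone{v_i, v_{i+1}} is nonsingular and the order is clockwise,
   i.e. det(v_i, v_{i+1}) = -1 for all i (cyclically). *)
Definition in_class (s : seq vec) : Prop :=
  let n := size s in
  [/\ (4 <= n)%N,
      [/\ nth (0, 0) s 0 = ((1 : int), (0 : int)),
          nth (0, 0) s (n - 3) = ((0 : int), (-1 : int)),
          nth (0, 0) s (n - 2) = ((-1 : int), (0 : int)) &
          nth (0, 0) s (n - 1) = ((0 : int), (1 : int))],
      (forall i, (1 <= i <= n - 4)%N ->
         0 < (nth (0, 0) s i).1 /\ (nth (0, 0) s i).2 < 0) &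
      (forall i, (i < n)%N -> det (cray s i) (cray s i.+1) = -1)].

(* a is the quiddity sequence of s: a_i v_i = v_{i-1} + v_{i+1} (cyclic);
   0-indexed: a`_i corresponds to the paper's a_{i+1}. *)
Definition is_quiddity (s : seq vec) (a : seq int) : Prop :=
  size a = size s /\
  forall i, (i < size s)%N ->
    vscale (nth 0 a i) (cray s i) = vadd (cray s (i + size s - 1)) (cray s i.+1).

(* Subdivision D_{sigma_i} of the facet sigma_i = cone{v_i, v_{i+1}}
   (paper's 1-indexed i, 1 <= i <= n): insert the ray v_i + v_{i+1}
   between v_i and v_{i+1}. *)
Definition subdiv (s : seq vec) (i : nat) : seq vec :=
  take i s ++ vadd (cray s i.-1) (cray s i) :: drop i s.

(* The linear map of R^2 sending (1,0) |-> (0,1) and (l,-1) |-> (1,0):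
   (x,y) |-> (-y, x + l y). *)
Definition rmap (l : int) (v : vec) : vec := (- v.2, v.1 + l * v.2).

(* Rotation rho: with v_2 = (l,-1), Sigma' has rays
   v_1, ..., v_{n-1}, (-l,1) in clockwise order (the ray v_n = (0,1) is
   replaced by (-l,1), and the cones sigma_+, sigma_{-+} by -sigma and
   cone{(-l,1),(1,0)}); rho(Sigma) is its image under [rmap l].  The final
   [rot 1] only re-chooses the starting ray so that the list starts at the
   image (1,0) of v_2, as required by our encoding. *)
Definition rho (s : seq vec) : seq vec :=
  let l := (nth (0, 0) s 1).1 in
  let s' := rcons (take (size s - 1) s) (- l, 1) in
  rot 1 (map (rmap l) s').

(* Main.v *)
Require Import Defs.
From mathcomp Require Import all_boot all_order all_algebra.
From mathcomp Require Import zify ring lra.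
Import Order.TTheory GRing.Theory Num.Theory.
Local Open Scope ring_scope.

Lemma cray_lt s k : (k < size s)%N -> cray s k = nth (0,0) s k.
Proof. by move=> h; rewrite /cray modn_small. Qed.

Lemma crayD s k : cray s (k + size s) = cray s k.
Proof. by rewrite /cray modnDr. Qed.

Lemma cray_mod s k : cray s (k %% size s) = cray s k.
Proof. by rewrite /cray modn_mod. Qed.

Lemma cray_map f s k : (0 < size s)%N -> cray (map f s) k = f (cray s k).
Proof.
move=> h; rewrite /cray size_map (nth_map (0,0)) //. by rewrite ltn_pmod.
Qed.

Lemma cray_rot1 s k : (0 < size s)%N -> cray (rot 1 s) k = cray s k.+1.
Proof.
case: s => [//|x t] _.
rewrite /cray size_rot.
have hj : (k %% (size t).+1 < (size t).+1)%N by rewrite ltn_pmod.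
have -> : (k.+1 %% (size t).+1 = (k %% (size t).+1).+1 %% (size t).+1)%N.
  by move: (modnDml k 1 (size t).+1); rewrite !addn1.
move: hj; move: (k %% (size t).+1)%N => j hj.
rewrite rot1_cons nth_rcons.
case: (ltnP j (size t)) => hjt.
  by rewrite (modn_small (m := j.+1)).
have hj' : j = size t by apply/eqP; rewrite eqn_leq hjt -ltnS hj.
by rewrite hj' eqxx modnn.
Qed.

Lemma rmap_scale l a v : rmap l (vscale a v) = vscale a (rmap l v).
Proof. case: v => x y; rewrite /rmap /vscale /=; f_equal; ring. Qed.
Lemma rmap_add l u v : rmap l (vadd u v) = vadd (rmap l u) (rmap l v).
Proof. case: u v => x y [z w]; rewrite /rmap /vadd /=; f_equal; ring. Qed.
Lemma rmap_inj l : injective (rmap l).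
Proof.
move=> [x y] [z w]; rewrite /rmap /= => [[h1 h2]].
have e : y = w by rewrite -[y]opprK h1 opprK.
by subst w; f_equal; move: h2 => /addIr.
Qed.
Lemma det_rmap l u v : det (rmap l u) (rmap l v) = det u v.
Proof. case: u v => x y [z w]; rewrite /rmap /det /=; ring. Qed.

Definition sp (s : seq vec) := rcons (take (size s - 1) s) (-(nth (0,0) s 1).1, 1).

Lemma size_sp s : (0 < size s)%N -> size (sp s) = size s.
Proof. move=> h; rewrite /sp size_rcons size_takel; set n := size s; lia. Qed.

Lemma nth_sp s j : (j < size s)%N -> (0 < size s)%N ->
  nth (0,0) (sp s) j = if (j < size s - 1)%N then nth (0,0) s j
                      else (-(nth (0,0) s 1).1, 1).
Proof.
move=> hj h; rewrite /sp nth_rcons size_takel; set n := size s in hj h *; last lia.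
case: ifP => hh; first by rewrite nth_take.
have -> : j = (size s - 1)%N by lia.
by rewrite eqxx.
Qed.

Lemma cray_rho s k : (0 < size s)%N ->
  cray (rho s) k = rmap (nth (0,0) s 1).1 (cray (sp s) k.+1).
Proof.
move=> h; rewrite /rho cray_rot1; last by rewrite size_map size_sp.
by rewrite cray_map // size_sp.
Qed.

Lemma size_rho s : (0 < size s)%N -> size (rho s) = size s.
Proof. by move=> h; rewrite /rho size_rot size_map -/(sp s) size_sp. Qed.

Lemma tri (a b c d e f : int) : 0 <= c - d -> 0 < e - f -> 0 < a - b ->
  a*d - b*c < 0 -> c*f - d*e < 0 -> a*f - b*e < 0.
Proof. nia. Qed.

Lemma det_nth s j : in_class s -> (j.+1 < size s)%N ->
  det (nth (0,0) s j) (nth (0,0) s j.+1) = -1.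
Proof.
case=> _ _ _ hd hj; rewrite -!cray_lt //; last exact: ltnW.
by apply: hd; apply: ltnW.
Qed.

Lemma s1_eq s : in_class s -> nth (0,0) s 1 = ((nth (0,0) s 1).1, -1).
Proof.
move=> hc; have := det_nth s 0 hc; case: (hc) => h4 [h0 _ _ _] _ _.
rewrite h0; case: (nth _ s 1) => x y /=; rewrite /det /= mul1r mul0r subr0 => -> //.
lia.
Qed.

Lemma q4 s j : in_class s -> (1 <= j <= size s - 3)%N ->
  [/\ 0 <= (nth (0,0) s j).1, 0 < (nth (0,0) s j).1 - (nth (0,0) s j).2
    & (nth (0,0) s j).2 < 0].
Proof.
case=> h4 [h0 h3 h2 h1] hm _ hj.
case: (ltnP j (size s - 3)) => hj3.
  have [] := hm j; first lia.
  move=> a b; split=> //; [exact: ltW | lia].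
have -> : j = (size s - 3)%N by lia.
by rewrite h3.
Qed.

Lemma chain s k : in_class s -> (2 <= k <= size s - 3)%N ->
  det (nth (0,0) s 1) (nth (0,0) s k) < 0.
Proof.
move=> hc; elim: k => [|k ih] hk; first lia.
case: (ltnP k 2) => hk2.
  have -> : k = 1%N by lia.
  by rewrite det_nth //; case: hc => h4 *; lia.
have ihk := ih ltac:(lia).
have [a1 a2 a3] := q4 s (1) hc ltac:(case: hc => h4 *; lia).
have [b1 b2 b3] := q4 s (k) hc ltac:(lia).
have [c1 c2 c3] := q4 s (k.+1) hc ltac:(lia).
have hd := det_nth s k hc ltac:(lia).
move: ihk hd a2 b2 c2; rewrite /det.
case: (nth _ s 1) => a b; case: (nth _ s k) => c d; case: (nth _ s k.+1) => e f /=.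
move=> h1 h2 ha hb hc'; have h2' : c * f - d * e < 0 by rewrite h2. 
nia.
Qed.

Lemma rho_prop s b : in_class s -> size b = (size s - 2)%N ->
  is_quiddity s (b ++ [:: 0; 0]) ->
  [/\ in_class (rho s), is_quiddity (rho s) (rot 1 b ++ [:: 0; 0])
    & size (rho s) = size s].
Proof.
move=> hc hb [_ hq].
have hs1 := s1_eq s hc.
case: (hc) => h4 [h0 h3 h2 h1] hm hd.
set l := (nth (0,0) s 1).1 in hs1.
have [n hn] : {n | size s = n} by exists (size s).
rewrite hn in h4 h3 h2 h1 hm hd hq hb.
have hn0 : (0 < size s)%N by rewrite hn; lia.
have hsz : size (rho s) = n by rewrite size_rho.
have hspz : size (sp s) = n by rewrite size_sp.
have cr k : cray (rho s) k = rmap l (cray (sp s) k.+1) by rewrite cray_rho.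
have csp j : (j < n - 1)%N -> cray (sp s) j = nth (0,0) s j.
  by move=> hj; rewrite cray_lt ?hspz ?nth_sp ?hn ?hj //; lia.
have cspl : cray (sp s) (n - 1) = (-l, 1).
  by rewrite cray_lt ?hspz ?nth_sp ?hn //; try lia; rewrite ifF //; lia.
have cspn : cray (sp s) n = (1, 0).
  by have := crayD (sp s) 0; rewrite add0n hspz => ->; rewrite csp ?h0 //; lia.
have cspn1 : cray (sp s) n.+1 = (l, -1).
  by have := crayD (sp s) 1; rewrite add1n hspz => ->; rewrite csp -?hs1 //; lia.
have ns1 : nth (0,0) s 1 = (l, -1) by [].
have nrho k : (k < n)%N -> nth (0,0) (rho s) k = rmap l (cray (sp s) k.+1).
  by move=> hk; rewrite -cray_lt ?hsz.
split=> //.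
- rewrite /in_class hsz; split => //.
  + split.
    * by rewrite nrho ?csp ?ns1 /rmap /=; try lia; f_equal; ring.
    * rewrite nrho ?csp; try lia.
      have -> : (n - 3).+1 = (n - 2)%N by lia.
      by rewrite h2 /rmap /=; f_equal; ring.
    * rewrite nrho; last lia.
      have -> : (n - 2).+1 = (n - 1)%N by lia.
      by rewrite cspl /rmap /=; f_equal; ring.
    * rewrite nrho; last lia.
      have -> : (n - 1).+1 = n by lia.
      by rewrite cspn /rmap /=; f_equal; ring.
  + move=> i hi; rewrite nrho ?csp; try lia.
    have hc2 := chain s i.+1 hc ltac:(rewrite hn; lia).
    have [_ _ hy] := q4 s i.+1 hc ltac:(rewrite hn; lia).
    move: hc2 hy; rewrite ns1 /det /rmap /=.
    case: (nth _ s i.+1) => x y /= ha hy.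
    split; lia.
  + move=> k hk; rewrite !cr det_rmap.
    case: (ltnP k.+1 (n - 2)) => hk1.
      rewrite !csp; try lia.
      by rewrite det_nth // hn; lia.
    case: (ltnP k.+1 (n - 1)) => hk2.
      have -> : k.+1 = (n - 2)%N by lia.
      have -> : (n - 2).+1 = (n - 1)%N by lia.
      by rewrite cspl csp ?h2 /det /=; try lia; ring.
    case: (ltnP k.+1 n) => hk3.
      have -> : k.+1 = (n - 1)%N by lia.
      have -> : (n - 1).+1 = n by lia.
      by rewrite cspl cspn /det /=; ring.
    have -> : k.+1 = n by lia.
    by rewrite cspn cspn1 /det /=; ring.
- have cs j : (j < n)%N -> cray s j = nth (0,0) s j.
    by move=> hj; rewrite cray_lt ?hn.
  case: b hb hq => [|b0 b'] hb hq; first by move: hb => /=; lia.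
  have hb0 : b0 = l.
    move: (hq 0%N ltac:(lia)); rewrite /= add0n !cs ?h0 ?h1 ?ns1; try lia.
    by rewrite /vscale /vadd /= => [[e1 _]]; lia.
  subst b0.
  rewrite rot1_cons; split.
    by rewrite size_cat size_rcons hsz /=; move: hb => /=; lia.
  move=> i hi; rewrite hsz in hi; rewrite hsz !cr -rmap_scale -rmap_add.
  congr (rmap l _).
  have -> : ((i + n - 1).+1 = i + size (sp s))%N by rewrite hspz; lia.
  rewrite crayD nth_cat size_rcons nth_rcons.
  have hb' : size b' = (n - 3)%N by move: hb => /=; lia.
  rewrite hb'.
  case: (ltnP i (n - 3)) => hi3.
    have -> : (i < (n - 3).+1)%N by lia.
    have := hq i.+1 ltac:(lia).
    have -> : (i.+1 + n - 1 = i + size s)%N by rewrite hn; lia.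
    rewrite crayD /= nth_cat hb' hi3.
    by rewrite !csp ?cs; try lia.
  case: (ltnP i (n - 2)) => hi2.
    have -> : i = (n - 3)%N by lia.
    rewrite ltnSn eqxx.
    have -> : (n - 3).+1 = (n - 2)%N by lia.
    have -> : (n - 2).+1 = (n - 1)%N by lia.
    rewrite cspl !csp ?h2 ?h3; try lia.
    by rewrite /vscale /vadd /=; f_equal; ring.
  have -> : (i < (n - 3).+1)%N = false by lia.
  case: (ltnP i (n - 1)) => hi1.
    have -> : i = (n - 2)%N by lia.
    have -> : (n - 2 - (n - 3).+1 = 0)%N by lia.
    have -> : (n - 2).+1 = (n - 1)%N by lia.
    have -> : (n - 1).+1 = n by lia.
    rewrite cspl cspn csp ?h2; try lia.
    by rewrite /vscale /vadd /=; f_equal; ring.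
  have -> : i = (n - 1)%N by lia.
  have -> : (n - 1 - (n - 3).+1 = 1)%N by lia.
  have -> : (n - 1).+1 = n by lia.
  rewrite cspl cspn cspn1.
  by rewrite /vscale /vadd /=; f_equal; ring.
- by rewrite hsz.
Qed.

Lemma vadd_cancel x y z : vadd x y = vadd x z -> y = z.
Proof.
case: x y z => a b [c d] [e f]; rewrite /vadd /= => [[h1 h2]].
by f_equal; [move: h1 => /addrI | move: h2 => /addrI].
Qed.

Lemma quid_uniq t u q : in_class t -> in_class u -> size t = size u ->
  is_quiddity t q -> is_quiddity u q -> t = u.
Proof.
case=> h4 [h0 _ _ h1] _ _; case=> _ [g0 _ _ g1] _ _ hsz [_ ht] [_ hu].
have [n hn] : {n | size t = n} by exists (size t).
rewrite hn in h4 h1 ht hsz; move/esym: hsz => hsz; rewrite hsz in g1 hu.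
apply: (eq_from_nth (x0 := (0,0))); first by rewrite hn hsz.
move=> k0; rewrite hn => hk0.
suff H : forall j, (j < n)%N -> forall k, (k <= j)%N -> nth (0,0) t k = nth (0,0) u k.
  by apply: (H k0 hk0 k0 (leqnn _)).
elim=> [|j ih] hj k hk'.
  have -> : k = 0%N by lia.
  by rewrite h0 g0.
case: (ltnP k j.+1) => hkj; first by apply: ih => //; lia.
have -> : k = j.+1 by lia.
have e1 := ht j ltac:(lia); have e2 := hu j ltac:(lia).
have ej : cray t j = cray u j.
  by rewrite !cray_lt ?hn ?hsz; try lia; apply: ih => //; lia.
have ep : cray t (j + n - 1) = cray u (j + n - 1).
  case: j ih hj ej e1 e2 {hk' hkj} => [|j] ih hj ej e1 e2.
    by rewrite add0n !cray_lt ?hn ?hsz ?h1 ?g1 //; lia.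
  have -> : (j.+1 + n - 1 = j + n)%N by lia.
  rewrite -{1}hn -{1}hsz !crayD !cray_lt ?hn ?hsz; try lia.
  by apply: ih => //; lia.
rewrite -!cray_lt ?hn ?hsz; try lia.
apply: (vadd_cancel (cray t (j + n - 1))).
by rewrite -e1 ep -e2 ej.
Qed.

Lemma iter_prop k t b : in_class t -> size b = (size t - 2)%N ->
  is_quiddity t (b ++ [:: 0; 0]) -> (k <= size b)%N ->
  [/\ in_class (iter k rho t), is_quiddity (iter k rho t) (rot k b ++ [:: 0; 0])
    & size (iter k rho t) = size t].
Proof.
move=> hc hb hq; elim: k => [|k ih] hk; first by rewrite rot0.
have [c1 q1 s1] := ih ltac:(lia).
have [c2 q2 s2] := rho_prop (iter k rho t) (rot k b) c1 ltac:(rewrite size_rot s1 //) q1.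
by rewrite iterS -add1n rotD // s2 s1.
Qed.

Definition qsub (q : seq int) p :=
  take p.-1 q ++ [:: q`_(p.-1) + 1; 1; q`_p + 1] ++ drop p.+1 q.

Lemma nth_subdiv t p k : (p <= size t)%N ->
  nth (0,0) (subdiv t p) k =
  if (k < p)%N then nth (0,0) t k
  else if k == p then vadd (cray t p.-1) (cray t p) else nth (0,0) t k.-1.
Proof.
move=> hp; rewrite /subdiv nth_cat size_takel //.
case: ltnP => hk; first by rewrite nth_take.
case: eqP => [->|hne]; first by rewrite subnn.
have -> : (k - p = (k - p.+1).+1)%N by lia.
by rewrite /= nth_drop; congr nth; lia.
Qed.

Lemma size_subdiv t p : (p <= size t)%N -> size (subdiv t p) = (size t).+1.
Proof. by move=> hp; rewrite /subdiv size_cat /= size_drop size_takel //; lia. Qed.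

Lemma nth_qsub q p i : (0 < p)%N -> (p < size q)%N ->
  nth 0 (qsub q p) i =
  if (i < p.-1)%N then q`_i else if i == p.-1 then q`_(p.-1) + 1
  else if i == p then 1 else if i == p.+1 then q`_p + 1 else q`_(i.-1).
Proof.
move=> hp hq; rewrite /qsub nth_cat size_takel; last by set m := size q in hq *; lia.
case: ltnP => h1; first by rewrite nth_take.
case: eqP => [->|h2]; first by rewrite subnn.
case: eqP => [->|h3].
  by have -> : (p - p.-1 = 1)%N by lia.
case: eqP => [->|h4].
  by have -> : (p.+1 - p.-1 = 2)%N by lia.
have -> : (i - p.-1 = (i - p.+2).+3)%N by lia.
by rewrite /= nth_drop; congr nth; lia.
Qed.

Lemma vs1 (a : int) v P N : vscale a v = vadd P N ->
  vscale (a + 1) v = vadd P (vadd v N).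
Proof.
case: v P N => x y [c d] [e f]; rewrite /vscale /vadd /= => [[h1 h2]].
by f_equal; rewrite mulrDl mul1r ?h1 ?h2; ring.
Qed.

Lemma vs2 (a : int) v P N : vscale a v = vadd P N ->
  vscale (a + 1) v = vadd (vadd P v) N.
Proof.
case: v P N => x y [c d] [e f]; rewrite /vscale /vadd /= => [[h1 h2]].
by f_equal; rewrite mulrDl mul1r ?h1 ?h2; ring.
Qed.

Lemma subdiv_prop t q p : in_class t -> is_quiddity t q ->
  (1 <= p <= size t - 3)%N ->
  [/\ in_class (subdiv t p), is_quiddity (subdiv t p) (qsub q p)
    & size (subdiv t p) = (size t).+1].
Proof.
move=> hc [hqs hq] hp.
case: (hc) => h4 [h0 h3 h2 h1] hm hd.
have [n hn] : {n | size t = n} by exists (size t).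
rewrite hn in h4 h3 h2 h1 hm hd hq hp hqs.
set w := subdiv t p.
set x := vadd (cray t p.-1) (cray t p).
have hw : size w = n.+1 by rewrite size_subdiv hn //; lia.
have ct j : (j < n)%N -> cray t j = nth (0,0) t j by move=> hj; rewrite cray_lt ?hn.
have cwl j : (j < p)%N -> cray w j = cray t j.
  move=> hj; rewrite cray_lt ?hw; last lia.
  by rewrite nth_subdiv ?hn ?hj ?ct //; lia.
have cwp : cray w p = x.
  by rewrite cray_lt ?hw ?nth_subdiv ?hn ?ltnn ?eqxx //; lia.
have cwh j : (p < j <= n.+1)%N -> cray w j = cray t j.-1.
  move=> hj; case: (ltnP j n.+1) => hj1.
    rewrite cray_lt ?hw // nth_subdiv ?hn; last lia.
    rewrite ifF; last lia. rewrite ifF; last lia.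
    by rewrite ct //; lia.
  have -> : j = n.+1 by lia.
  have := crayD w 0; rewrite add0n hw => ->.
  have := crayD t 0; rewrite add0n hn /= => ->.
  by rewrite cwl //; lia.
have ctp j : (0 < j < n)%N -> cray t (j + n - 1) = cray t j.-1.
  move=> hj; have -> : (j + n - 1 = j.-1 + size t)%N by rewrite hn; lia.
  by rewrite crayD.
have dt j : (j < n)%N -> det (cray t j) (cray t j.+1) = -1 by apply: hd.
split=> //.
- rewrite /in_class hw; split.
  + lia.
  + split.
    * rewrite nth_subdiv ?hn; last lia.
      by rewrite ifT ?h0 //; lia.
    * rewrite nth_subdiv ?hn; last lia.
      rewrite ifF; last lia. rewrite ifF; last lia.
      by have -> : (n.+1 - 3).-1 = (n - 3)%N by lia.
    * rewrite nth_subdiv ?hn; last lia.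
      rewrite ifF; last lia. rewrite ifF; last lia.
      by have -> : (n.+1 - 2).-1 = (n - 2)%N by lia.
    * rewrite nth_subdiv ?hn; last lia.
      rewrite ifF; last lia. rewrite ifF; last lia.
      by have -> : (n.+1 - 1).-1 = (n - 1)%N by lia.
  + move=> k hk; rewrite nth_subdiv ?hn; last lia.
    case: ltnP => hkp; first by apply: hm; lia.
    case: eqP => hkp'.
      have [a1 a2 a3] := q4 t p hc ltac:(rewrite hn; lia).
      have hb : (0 < (nth (0,0) t p.-1).1 /\ (nth (0,0) t p.-1).2 <= 0).
        case: (posnP p.-1) => hp1; first by rewrite hp1 h0.
        have [] := hm p.-1 ltac:(lia); move=> u1 u2; split=> //; exact: ltW.
      rewrite /x !ct; try lia.
      move: hb a1 a3; rewrite /vadd.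
      case: (nth _ t p.-1) => c d; case: (nth _ t p) => e f /= [u1 u2] v1 v2.
      split; lia.
    by apply: hm; lia.
  + move=> k hk.
    case: (ltnP k.+1 p) => hk1.
      by rewrite !cwl ?dt //; lia.
    case: (ltnP k p) => hk2.
      have -> : k = p.-1 by lia.
      have -> : p.-1.+1 = p by lia.
      rewrite cwl ?cwp; last lia.
      move: (dt p.-1 ltac:(lia)); have -> : p.-1.+1 = p by lia.
      rewrite /x /det /vadd; case: (cray t p.-1) => c d; case: (cray t p) => e f /=.
      move=> <-; ring.
    case: (ltnP p k) => hk3.
      rewrite !cwh; try lia.
      have -> : k.+1.-1 = k.-1.+1 by lia.
      by rewrite dt; lia.
    have -> : k = p by lia.
    rewrite cwp cwh /=; last lia.
    move: (dt p.-1 ltac:(lia)); have -> : p.-1.+1 = p by lia.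
    rewrite /x /det /vadd; case: (cray t p.-1) => c d; case: (cray t p) => e f /=.
    move=> <-; ring.
- split.
    by rewrite hw /qsub !size_cat size_takel /= ?size_drop; lia.
  move=> i; rewrite hw => hi.
  have -> : (i + n.+1 - 1 = i + n)%N by lia.
  rewrite nth_qsub; try lia.
  have cwpl j : (j <= p)%N -> cray w (j + n) = cray t (j + n - 1).
    move=> hj; case: (posnP j) => hj0.
      by rewrite hj0 add0n cwh ?subn1 //; lia.
    rewrite (ctp j); last lia.
    have -> : (j + n = j.-1 + size w)%N by rewrite hw; lia.
    by rewrite crayD cwl //; lia.
  have cwpr j : (p < j <= n)%N -> cray w (j + n) = cray w j.-1.
    move=> hj; have -> : (j + n = j.-1 + size w)%N by rewrite hw; lia.
    by rewrite crayD.
  case: ltnP => ha.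
    rewrite cwpl ?(cwl i) ?(cwl i.+1) ?hq //; lia.
  case: eqP => hb.
    rewrite hb cwpl ?(cwl p.-1); try lia.
    have -> : p.-1.+1 = p by lia.
    rewrite cwp /x.
    apply: vs1; move: (hq p.-1 ltac:(lia)).
    by have -> : p.-1.+1 = p by lia.
  case: eqP => hc'.
    rewrite hc' cwp cwpl ?cwh // ?ctp /x; try lia.
    by case: (vadd _ _) => u1 u2; rewrite /vscale /= !mul1r.
  case: eqP => hd'.
    rewrite hd' cwpr ?(cwh p.+1) ?(cwh p.+2) /x; try lia.
    rewrite /= cwp; apply: vs2; move: (hq p ltac:(lia)).
    by rewrite ctp //; lia.
  rewrite cwpr ?cwh; try lia.
  have := hq i.-1 ltac:(lia).
  rewrite ctp; last lia.
  by have -> : i.-1.+1 = i.+1.-1 by lia.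
- by rewrite hw hn.
Qed.

Lemma qsub_split (a1 a2 : seq int) x y :
  qsub (a1 ++ [:: x; y] ++ a2) (size a1).+1 = a1 ++ [:: x + 1; 1; y + 1] ++ a2.
Proof.
rewrite /qsub /= take_cat ltnn subnn take0 cats0 nth_cat ltnn subnn /=.
rewrite nth_cat ltnNge leqnSn /= subSnn /= drop_cat ifF; last lia.
by rewrite -addn2 addKn /= drop0.

Qed.

Lemma decomp (b : seq int) p : (0 < p)%N -> (p < size b)%N ->
  b = take p.-1 b ++ [:: b`_p.-1; b`_p] ++ drop p.+1 b.
Proof.
move=> h0 h1; rewrite -{1}(cat_take_drop p.-1 b); congr cat.
rewrite (drop_nth 0); last by set m := size b in h1 *; lia.
have -> : p.-1.+1 = p by lia.
by rewrite (drop_nth 0).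
Qed.

Lemma size_take_pred (b : seq int) p : (p < size b)%N -> size (take p.-1 b) = p.-1.
Proof. move=> h; rewrite size_takel //; set m := size b in h *; lia. Qed.

Lemma rho_l t : in_class t ->
  nth (0,0) (rho t) (size t - 4) = (1, - (nth (0,0) t 1).1).
Proof.
move=> hc; case: (hc) => h4 [_ h3 _ _] _ _.
have [n hn] : {n | size t = n} by exists (size t).
rewrite hn in h4 h3 *.
rewrite -cray_lt ?size_rho ?hn; try lia.
rewrite cray_rho ?hn; last lia.
rewrite cray_lt ?size_sp ?hn; try lia.
rewrite nth_sp ?hn; try lia.
rewrite ifT; last lia.
have -> : (n - 4).+1 = (n - 3)%N by lia.
by rewrite h3 /rmap /=; f_equal; ring.
Qed.

Lemma rho_inj t u : in_class t -> in_class u -> rho t = rho u -> t = u.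
Proof.
move=> ht hu e.
have hs : size t = size u.
  have ht0 : (0 < size t)%N by case: ht => h4 *; lia.
  have hu0 : (0 < size u)%N by case: hu => h4 *; lia.
  by rewrite -(size_rho t ht0) e size_rho.
have e4 := rho_l t ht; rewrite hs e (rho_l u hu) in e4.
case: e4 => /oppr_inj hl.
have : rot 1 (map (rmap (nth (0,0) u 1).1) (sp u)) =
       rot 1 (map (rmap (nth (0,0) t 1).1) (sp t)) by exact: esym e.
rewrite hl => /rot_inj /(inj_map (@rmap_inj _)) hsp.
case: (ht) => h4 [_ _ _ h1] _ _; case: (hu) => _ [_ _ _ g1] _ _.
apply: (eq_from_nth (x0 := (0,0))) => // k hk.
have [n hn] : {n | size t = n} by exists (size t).
rewrite hn in h4 h1 hk hs; rewrite -hs in g1.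
case: (ltnP k (n - 1)) => hk1.
  have := congr1 (fun z => nth (0,0) z k) hsp.
  by rewrite /= !nth_sp ?hn -?hs ?hk1 //; lia.
have -> : k = (n - 1)%N by lia.
by rewrite h1 g1.
Qed.

Theorem proposition4p5 (s : seq vec) (a : seq int) :
  in_class s ->
  size a = (size s - 2)%N ->
  is_quiddity s (a ++ [:: 0; 0]) ->
  [/\ in_class (rho s) /\ is_quiddity (rho s) (rot 1 a ++ [:: 0; 0]),
      iter (size s - 2) rho s = s,
      (forall t u, in_class t -> in_class u -> rho t = rho u -> t = u),
      (exists u, in_class u /\ rho u = s) &
      (forall i, (1 <= i <= size s - 3)%N ->
         subdiv s i =
         iter (size s - 3 - i) rho (subdiv (iter i.+1 rho s) (size s - 3)))].
Proof.
move=> hc ha hq.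
have h4 : (3 < size s)%N by case: hc.
have [c1 q1 _] := rho_prop s a hc ha hq.
have hfix : iter (size s - 2) rho s = s.
  have [c2 q2 s2] := iter_prop (size s - 2) s a hc ha hq ltac:(by rewrite ha).
  have e : rot (size s - 2) a = a by rewrite -ha rot_size.
  rewrite e in q2.
  exact: (quid_uniq _ _ _ c2 hc s2 q2 hq).
split=> //.
- exact: rho_inj.
- have [c3 _ _] := iter_prop (size s - 3) s a hc ha hq ltac:(rewrite ha; lia).
  exists (iter (size s - 3) rho s); split=> //.
  rewrite -iterS; have -> : (size s - 3).+1 = (size s - 2)%N by lia.
  exact: hfix.
move=> i hi.
have [n hn] : {n | size s = n} by exists (size s).
rewrite hn in h4 hi ha *.
have ha' : size a = (size s - 2)%N by rewrite hn.
set a1 := take i.-1 a; set x := a`_i.-1; set y := a`_i; set a2 := drop i.+1 a.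
have hdec : a = a1 ++ [:: x; y] ++ a2 by apply: decomp; rewrite ?ha; lia.
have hs1 : size a1 = i.-1 by apply: size_take_pred; rewrite ha; lia.
have hs2 : size a2 = (n - 3 - i)%N by rewrite size_drop ha; lia.
have [cl ql sl] := subdiv_prop s (a ++ [:: 0; 0]) i hc hq ltac:(rewrite hn; lia).
have el : qsub (a ++ [:: 0; 0]) i = a1 ++ [:: x + 1; 1; y + 1] ++ (a2 ++ [:: 0; 0]).
  rewrite {1}hdec -!catA -qsub_split hs1; congr qsub; lia.
rewrite el in ql.
have [ct qt st] := iter_prop i.+1 s a hc ha' hq ltac:(rewrite ha; lia).
have er : rot i.+1 a ++ [:: 0; 0] = (a2 ++ a1) ++ [:: x; y] ++ [:: 0; 0].
  rewrite {1}hdec catA.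
  have -> : i.+1 = size (a1 ++ [:: x; y]) by rewrite size_cat hs1 /=; lia.
  by rewrite rot_size_cat -!catA.
rewrite er in qt.
have [cw qw sw] := subdiv_prop _ _ (n - 3) ct qt ltac:(rewrite st hn; lia).
have ew : qsub ((a2 ++ a1) ++ [:: x; y] ++ [:: 0; 0]) (n - 3) =
          ((a2 ++ a1) ++ [:: x + 1; 1; y + 1]) ++ [:: 0; 0].
  have -> : (n - 3)%N = (size (a2 ++ a1)).+1 by rewrite size_cat hs1 hs2; lia.
  by rewrite qsub_split !catA.
rewrite ew in qw.
have [cr qr sr] := iter_prop (n - 3 - i) (subdiv (iter i.+1 rho s) (n - 3)) ((a2 ++ a1) ++ [:: x + 1; 1; y + 1]) cw
   ltac:(rewrite sw st hn !size_cat hs1 hs2 /=; lia) qw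
   ltac:(rewrite !size_cat hs1 hs2 /=; lia).
have er2 : rot (n - 3 - i) ((a2 ++ a1) ++ [:: x + 1; 1; y + 1]) =
           a1 ++ [:: x + 1; 1; y + 1] ++ a2.
  by rewrite -catA -hs2 rot_size_cat catA.
rewrite er2 -catA in qr.
apply: (quid_uniq _ _ _ cl cr _ ql qr).
by rewrite sr sw st sl.
Qed.
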